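(* Let $f_0:\mathbb{T}\times\mathbb{R}\to\mathbb{T}\times\mathbb{R}$ be the map $(\psi,w)\mapsto(\psi_1,w_1)$ with $\psi_1=\psi+w$, $w_1=w+2\pi(\cos\psi_1-1)$ (i.e. $f_\mu$ with $\mu=0$). Then the fixed point $(0,0)$ is locally unstable under $f_0$.
   Context: $\mathbb{T}=\mathbb{R}/2\pi\mathbb{Z}$. A fixed point $p_{\rm s}$ is locally stable if for every $\epsilon>0$ there exists $\delta>0$ such that $\|p-p_{\rm s}\|<\delta$ implies $\|f^n(p)-p_{\rm s}\|<\epsilon$ for all $n\in\mathbb{Z}$; otherwise it is locally unstable. *)

(* Defs.v *)
From Stdlib Require Import Reals Lra ZArith.
Open Scope R_scope.

(* Points of T x R are represented by lifts (psi, w) in R x R; all notions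
   below are 2*PI-periodic in psi, so they descend to T x R. *)

Definition f0 (p : R * R) : R * R :=
  let psi1 := fst p + snd p in
  (psi1, snd p + 2 * PI * (cos psi1 - 1)).

Definition f0_inv (q : R * R) : R * R :=
  let w := snd q - 2 * PI * (cos (fst q) - 1) in
  (fst q - w, w).

Definition f0_iter (n : Z) (p : R * R) : R * R :=
  match n with
  | Z0 => p
  | Zpos k => Pos.iter f0 p k
  | Zneg k => Pos.iter f0_inv p k
  end.

(* Distance from x (mod 2 PI) to 0 on T = R / 2 PI Z:
   |x - 2 PI k| where x - 2 PI k is the representative in [-PI, PI). *)
Definition tnorm (x : R) : R :=
  Rabs (x - 2 * PI * IZR (Int_part ((x + PI) / (2 * PI)))).

Definition dist0 (p : R * R) : R :=
  sqrt (tnorm (fst p) ^ 2 + snd p ^ 2).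

Definition locally_stable_origin (f_iter : Z -> R * R -> R * R) : Prop :=
  forall eps, eps > 0 -> exists delta, delta > 0 /\
    forall p, dist0 p < delta -> forall n : Z, dist0 (f_iter n p) < eps.

(* Main.v *)
Require Import Defs.
From Stdlib Require Import Reals ZArith.
From Stdlib Require Import Lra.
Open Scope R_scope.

Lemma iter_of_succ (m : nat) (p : R*R) :
  Pos.iter f0 p (Pos.of_succ_nat m) = Nat.iter (S m) f0 p.
Proof.
  induction m as [|m IH]; [reflexivity|].
  change (Pos.of_succ_nat (S m)) with (Pos.succ (Pos.of_succ_nat m)).
  rewrite Pos.iter_succ, IH. reflexivity.
Qed.

Lemma dist0_snd q : Rabs (snd q) <= dist0 q.
Proof.
  unfold dist0. rewrite <- sqrt_Rsqr_abs. apply sqrt_le_1_alt.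
  unfold Rsqr. simpl. nra.
Qed.

Lemma tnorm0 : tnorm 0 = 0.
Proof.
  unfold tnorm. assert (PI > 0) by apply PI_RGT_0.
  replace ((0 + PI) / (2 * PI)) with (/2) by (field; lra).
  unfold Int_part. rewrite <- (tech_up (/2) 1); simpl; [|lra|lra].
  rewrite Rmult_0_r. rewrite Rminus_0_r, Rabs_R0. reflexivity.
Qed.

Lemma cos_neg_zone x : -3 < x -> x <= -2 -> cos x <= 0.
Proof.
  intros. rewrite <- cos_neg. pose proof PI_4. pose proof PI2_3_2. apply cos_le_0; lra.
Qed.

Theorem mainTheorem2 :
  f0 (0, 0) = (0, 0) /\ ~ locally_stable_origin f0_iter.
Proof.
  split.
  { unfold f0; simpl. rewrite Rplus_0_r, cos_0. f_equal; ring. }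
  intro H. destruct (H 1 ltac:(lra)) as [delta [Hd Hs]].
  set (a := Rmin (delta/2) (1/2)).
  assert (Ha0 : 0 < a) by (unfold a; apply Rmin_glb_lt; lra).
  assert (Ha1 : a < delta) by (unfold a; pose proof (Rmin_l (delta/2) (1/2)); lra).
  assert (Ha2 : a <= 1/2) by (unfold a; apply Rmin_r).
  set (p := (0, -a)).
  assert (Hp : dist0 p < delta).
  { unfold dist0, p. cbv [fst snd]. rewrite tnorm0.
    replace (0 ^ 2 + (- a) ^ 2) with (a²) by (unfold Rsqr; ring).
    rewrite sqrt_Rsqr; lra. }
  pose (g n := Nat.iter n f0 p).
  assert (Hg : forall n, snd (g n) > -1).
  { intro n. destruct n as [|m].
    - unfold g, p; simpl. lra.
    - pose proof (Hs p Hp (Zpos (Pos.of_succ_nat m))) as Hn.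
      simpl in Hn. rewrite iter_of_succ in Hn. pose proof (dist0_snd (g (S m))).
      unfold g in *.
      destruct (Rabs_def2 (snd (Nat.iter (S m) f0 p)) 1); [lra|lra]. }
  assert (Hstep : forall n, g (S n) = f0 (g n)) by reflexivity.
  assert (Hw : forall n, snd (g n) <= -a).
  { induction n. simpl; lra. rewrite Hstep. unfold f0; simpl.
    pose proof (COS_bound (fst (g n) + snd (g n))) as [_ Hc].
    pose proof PI_RGT_0. nra. }
  assert (Hpsi : forall n, fst (g n) <= - INR n * a).
  { induction n. simpl; lra. rewrite Hstep. unfold f0; simpl fst.
    rewrite S_INR. specialize (Hw n). lra. }
  assert (Hgt : forall n, fst (g n) > -2).
  { induction n. simpl; lra.
    pose proof (Hg (S n)) as HgS. pose proof (Hg n) as Hgn.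
    rewrite Hstep in *. unfold f0 in *; simpl fst in *; simpl snd in *.
    destruct (Rle_lt_dec (fst (g n) + snd (g n)) (-2)) as [Hle|Hlt]; [|lra].
    pose proof (cos_neg_zone (fst (g n) + snd (g n)) ltac:(lra) Hle).
    specialize (Hw n). pose proof PI2_3_2. nra. }
  destruct (archimed (2 / a)) as [Hup _].
  assert (Hup' : 2 / a < INR (Z.to_nat (up (2 / a)))).
  { rewrite INR_IZR_INZ. rewrite Z2Nat.id; [lra|].
    apply le_IZR. assert (0 < 2/a) by (apply Rdiv_lt_0_compat; lra). lra. }
  set (N := Z.to_nat (up (2/a))) in *.
  specialize (Hpsi N). specialize (Hgt N).
  assert (2 < INR N * a).
  { apply (Rmult_lt_compat_r a) in Hup'; [|lra].
    replace (2 / a * a) with 2 in Hup' by (field; lra). lra. }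
  lra.
Qed.
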